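(* For every time horizon $T\in\mathbb N$, every algorithm for the two-bit feedback brokerage problem satisfies \[\sup_\nu R_T^\nu\ge\frac T9,\] where the supremum is over all probability distributions $\nu$ on $[0,1]$.
   Context: Brokerage setting: for $p,v_1,v_2\in[0,1]$ let $\mathrm{gft}(p,v_1,v_2):=(v_1\vee v_2-v_1\wedge v_2)\,\mathbb I\{v_1\wedge v_2\le p\le v_1\vee v_2\}$ ($\vee,\wedge$ = max, min). Valuations $V_1,V_2,\dots$ are i.i.d. with law $\nu$ on $[0,1]$; at round $t$ the algorithm posts $P_t\in[0,1]$ and obtains $\mathrm{GFT}_t(P_t)$ with $\mathrm{GFT}_t(q):=\mathrm{gft}(q,V_{2t-1},V_{2t})$. A two-bit feedback algorithm chooses $P_t$ as a function of the bits $\mathbb I\{P_s\le V_{2s-1}\},\mathbb I\{P_s\le V_{2s}\}$, $s<t$ (and possibly of internal randomness independent of the valuations). $R_T^\nu:=\sup_{p\in[0,1]}\mathbb E[\sum_{t=1}^T\mathrm{GFT}_t(p)]-\mathbb E[\sum_{t=1}^T\mathrm{GFT}_t(P_t)]$ when valuations have law $\nu$. *)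

(* Defs.v *)
From HB Require Import structures.
From mathcomp Require Import all_boot all_order all_algebra.
From mathcomp Require Import all_classical all_reals all_analysis.
Set Implicit Arguments. Unset Strict Implicit. Unset Printing Implicit Defensive.
Import Order.TTheory GRing.Theory Num.Theory.
Local Open Scope classical_set_scope.
Local Open Scope ring_scope.

Definition gft {R : realType} (p v1 v2 : R) : R :=
  if (Num.min v1 v2 <= p) && (p <= Num.max v1 v2)
  then Num.max v1 v2 - Num.min v1 v2 else 0.

(* A (deterministic, given its internal randomness) two-bit feedback policy:
   it maps the history of past feedback bits
   [:: (1{P_1 <= V_1}, 1{P_1 <= V_2}); ...; (1{P_{t-1} <= V_{2t-3}}, 1{P_{t-1} <= V_{2t-2}})]
   to the price P_t. *)
Definition policy (R : realType) := seq (bool * bool) -> R.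

(* This is the expectation written as the iterated integral over the pair
   (V_{2t-1}, V_{2t}) of each round. *)
Fixpoint exp_reward {R : realType} (nu : probability R R) (A : policy R)
    (h : seq (bool * bool)) (n : nat) : \bar R :=
  match n with
  | 0 => 0%E
  | n'.+1 =>
      let p := A h in
      (\int[nu]_v1 \int[nu]_v2
         ((gft p v1 v2)%:E + exp_reward nu A (rcons h ((p <= v1)%R, (p <= v2)%R)) n'))%E
  end.

(* Expected total gain E[sum_{t<=T} GFT_t(P_t)] of a randomized algorithm:
   alg w is the policy used when the internal randomness (independent of the
   valuations, with law Q on Omega) takes the value w. *)
Definition alg_reward {R : realType} {d : measure_display} {Omega : measurableType d}
    (Q : probability Omega R) (alg : Omega -> policy R)
    (nu : probability R R) (T : nat) : \bar R :=
  (\int[Q]_w exp_reward nu (alg w) [::] T)%E.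

Definition fixed_reward {R : realType} (nu : probability R R) (p : R) (T : nat)
  : \bar R := exp_reward nu (fun _ => p) [::] T.

Definition regret {R : realType} {d : measure_display} {Omega : measurableType d}
    (Q : probability Omega R) (alg : Omega -> policy R)
    (nu : probability R R) (T : nat) : \bar R :=
  (ereal_sup [set fixed_reward nu p T | p in `[0%R, 1%R]%classic]
   - alg_reward Q alg nu T)%E.

Definition prob_on01 {R : realType} (nu : probability R R) : Prop :=
  nu `[0%R, 1%R]%classic = 1%E.

Definition valid_alg {R : realType} {d : measure_display} {Omega : measurableType d}
    (alg : Omega -> policy R) : Prop :=
  (forall w h, alg w h \in `[0, 1]) /\
  (forall h, measurable_fun setT (fun w => alg w h)).

(* Main.v *)
Require Import Defs.
From HB Require Import structures.
From mathcomp Require Import all_boot all_order all_algebra.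
From mathcomp Require Import all_classical all_reals all_analysis.
From mathcomp Require Import measurable_realfun ring lra.
Import Order.TTheory GRing.Theory Num.Theory.
Local Open Scope classical_set_scope.
Local Open Scope ring_scope.
Section Infra.
Context {R : realType}.
Local Open Scope ereal_scope.

Lemma integral_ext d (T : measurableType d) (m1 m2 : {measure set T -> \bar R}) (D : set T) (f : T -> \bar R) :
  (forall A, m1 A = m2 A) -> \int[m1]_(x in D) f x = \int[m2]_(x in D) f x.
Proof.
move=> e.
have E : (m1 : set T -> \bar R) = m2 by apply: funext.
by rewrite /integral E.
Qed.


Lemma le_int_nm d (T : measurableType d) (m : {measure set T -> \bar R}) (f g : T -> \bar R) :
  (forall x, 0 <= f x) -> (forall x, f x <= g x) ->
  \int[m]_x f x <= \int[m]_x g x.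
Proof.
move=> f0 fg.
have g0 : forall x, 0 <= g x by move=> x; exact: le_trans (f0 x) (fg x).
rewrite !ge0_integralTE//.
apply: le_ereal_sup => _ [h /= hf <-]; exists h => //= x.
exact: le_trans (hf x) (fg x).
Qed.

Lemma meas_fin_const (S : set R) (h : R -> \bar R) c :
  finite_set S -> (forall v, ~ S v -> h v = c) -> measurable_fun setT h.
Proof.
move=> fS hc _ Y mY; rewrite setTI.
have mS : forall A, A `<=` S -> measurable A.
  move=> A AS; apply: countable_measurable; first exact: measurable_set1.
  exact/finite_set_countable/(sub_finite_set AS).
have -> : h @^-1` Y = (S `&` h @^-1` Y) `|` (~` S `&` h @^-1` Y).
  by rewrite -setIUl setUCr setTI.
apply: measurableU; first by apply: mS; exact: subIsetl.
have [Yc|Yc] := pselect (Y c).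
- have -> : ~` S `&` h @^-1` Y = ~` S.
    apply/seteqP; split; first exact: subIsetl.
    by move=> v Sv; split => //=; rewrite hc.
  by apply: measurableC; exact: mS.
- have -> : ~` S `&` h @^-1` Y = set0.
    by apply/seteqP; split => // v [Sv /=]; rewrite hc.
  exact: measurable0.
Qed.

Definition mu3 (x : R) : {measure set R -> \bar R} :=
  measure_add (measure_add \d_(0%R:R) \d_x) (measure_add \d_x \d_(1%R:R)).

Definition nu (x : R) : probability R R := mnormalize (mu3 x) \d_(0%R:R).

End Infra.
Arguments le_int_nm {R d T m f g}.
Arguments integral_ext {R d T m1 m2 D f}.

Section Nu.
Context {R : realType}.
Local Open Scope ereal_scope.

Lemma mu3_int_meas (x : R) (f : R -> \bar R) : (forall v, 0 <= f v) -> measurable_fun setT f ->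
  \int[mu3 x]_v f v = f 0%R + f x + (f x + f 1%R).
Proof.
move=> f0 mf.
rewrite /mu3 ge0_integral_measure_add//.
rewrite ge0_integral_measure_add// ge0_integral_measure_add//.
by rewrite !integral_dirac// !diracT !mul1e.
Qed.

Lemma mu3T (x : R) : mu3 x setT = 4%:E.
Proof.
have := integral_cst (mu3 x) measurableT 1.
rewrite mul1e mu3_int_meas// => <-.
by rewrite -!EFinD; congr EFin; lra.
Qed.

Lemma nuE (x : R) A : nu x A = mscale ((4^-1 : R)%:nng)%R (mu3 x) A.
Proof.
rewrite /nu /=; unfold mnormalize; rewrite mu3T /mscale /=.
rewrite ifF; first by rewrite muleC.
by apply/negbTE; rewrite negb_or eqe; apply/andP; split => //; rewrite pnatr_eq0.
Qed.

Definition S3 (x : R) : set R := [set 0%R; x; 1%R].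

Lemma S3_fin x : finite_set (S3 x).
Proof. by rewrite /S3 !finite_setU; repeat split; exact: finite_set1. Qed.

Lemma nu_int (x : R) (f : R -> \bar R) : (forall v, 0 <= f v) ->
  \int[nu x]_v f v = (4^-1)%:E * (f 0%R + f x + (f x + f 1%R)).
Proof.
move=> f0.
have S0 : 0%R \in S3 x by apply/mem_set; rewrite /S3 /=; left; left.
have Sx : x \in S3 x by apply/mem_set; rewrite /S3 /=; left; right.
have S1 : 1%R \in S3 x by apply/mem_set; rewrite /S3 /=; right.
rewrite (integral_ext (nuE x)).
pose g := fun v => if v \in S3 x then f v else 0.
pose g' := fun v => if v \in S3 x then f v else +oo.
have g0 : forall v, 0 <= g v by move=> v; rewrite /g; case: ifP.
have g'0 : forall v, 0 <= g' v by move=> v; rewrite /g'; case: ifP.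
have mg : measurable_fun setT g.
  apply: (meas_fin_const _ _ 0 (S3_fin x)) => v Sv.
  by rewrite /g ifF//; apply/negbTE; rewrite notin_setE.
have mg' : measurable_fun setT g'.
  apply: (meas_fin_const _ _ +oo (S3_fin x)) => v Sv.
  by rewrite /g' ifF//; apply/negbTE; rewrite notin_setE.
apply/eqP; rewrite eq_le; apply/andP; split.
- have fg' : forall v, f v <= g' v by move=> v; rewrite /g'; case: ifP => // _; exact: leey.
  apply: (le_trans (le_int_nm f0 fg')).
  rewrite ge0_integral_mscale// mu3_int_meas//.
  by rewrite /g' S0 Sx S1.
- have gf : forall v, g v <= f v by move=> v; rewrite /g; case: ifP => // _; exact: f0.
  apply: (le_trans _ (le_int_nm g0 gf)).
  rewrite ge0_integral_mscale// mu3_int_meas//.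
  by rewrite /g S0 Sx S1.
Qed.

End Nu.
Section Gft.
Context {R : realType}.

Lemma gft_lt (p a b : R) : a <= b -> gft p a b = if (a <= p) && (p <= b) then b - a else 0.
Proof. by move=> ab; rewrite /gft (min_idPl ab) (max_idPr ab). Qed.

Lemma gft_gt (p a b : R) : a <= b -> gft p b a = if (a <= p) && (p <= b) then b - a else 0.
Proof. by move=> ab; rewrite /gft (min_idPr ab) (max_idPl ab). Qed.

Lemma gft_ge0 (p a b : R) : 0 <= gft p a b.
Proof.
have [ab|/ltW ab] := leP a b; [rewrite gft_lt//|rewrite gft_gt//]; case: ifP => // _; lra.
Qed.

Lemma gft_le1 (p a b : R) : 0 <= a <= 1 -> 0 <= b <= 1 -> gft p a b <= 1.
Proof.
move=> /andP[a0 a1] /andP[b0 b1].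
have [ab|/ltW ab] := leP a b; [rewrite gft_lt//|rewrite gft_gt//]; case: ifP => // _; lra.
Qed.

Lemma gft_diag (p a : R) : gft p a a = 0.
Proof. by rewrite /gft subrr; case: ifP. Qed.

Definition Er (x : R) (r : R -> R) := 4^-1 * (r 0 + r x + (r x + r 1)).
Definition gp (x p : R) := Er x (fun v1 => Er x (fun v2 => gft p v1 v2)).

Lemma gpE (x p : R) : 0 <= x <= 1 -> 0 <= p <= 1 ->
  gp x p = 8^-1 + (if p <= x then x / 4 else 0) + (if x <= p then (1 - x) / 4 else 0).
Proof.
move=> /andP[x0 x1] /andP[p0 p1].
have le01 : (0:R) <= 1 by [].
rewrite /gp /Er !gft_diag (gft_lt p _ _ x0) (gft_gt p _ _ x0) (gft_lt p _ _ le01) (gft_gt p _ _ le01)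
  (gft_lt p _ _ x1) (gft_gt p _ _ x1) p0 p1 /=.
case: (lerP p x) => px; case: (lerP x p) => xp /=; lra.
Qed.

End Gft.

Section Pol.
Context {R : realType}.
Local Open Scope ereal_scope.

Definition Ef (x : R) (f : R -> \bar R) := (4^-1)%:E * (f 0%R + f x + (f x + f 1%R)).

Lemma Ef_mono x f g : (forall v, f v <= g v) -> Ef x f <= Ef x g.
Proof.
move=> fg; rewrite /Ef; apply: lee_wpmul2l; first by rewrite lee_fin invr_ge0.
by apply: leeD; apply: leeD.
Qed.

Lemma exp_reward_ge0 (n : probability R R) A h k : 0 <= exp_reward n A h k.
Proof.
elim: k h => [|k IH] h //=.
apply: integral_ge0 => v1 _; apply: integral_ge0 => v2 _.
by apply: adde_ge0 => //; rewrite lee_fin gft_ge0.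
Qed.

Lemma step x A h n : exp_reward (nu x) A h n.+1 =
  Ef x (fun v1 => Ef x (fun v2 => (gft (A h) v1 v2)%:E +
     exp_reward (nu x) A (rcons h ((A h <= v1)%R, (A h <= v2)%R)) n)).
Proof.
have H0 : forall v1 v2, 0 <= (gft (A h) v1 v2)%:E +
     exp_reward (nu x) A (rcons h ((A h <= v1)%R, (A h <= v2)%R)) n.
  by move=> v1 v2; apply: adde_ge0; [rewrite lee_fin gft_ge0|exact: exp_reward_ge0].
rewrite /= nu_int; last by move=> v; apply: integral_ge0.
by rewrite /Ef !nu_int.
Qed.

Lemma Ef_gp x p B : Ef x (fun v1 => Ef x (fun v2 => (gft p v1 v2 + B)%:E)) = (gp x p + B)%:E.
Proof.
by rewrite /Ef /gp /Er -!EFinD -!EFinM; congr EFin; lra.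
Qed.

Lemma step_le (x : R) (A : policy R) h n (B : R) : (forall b, exp_reward (nu x) A (rcons h b) n <= B%:E) ->
  exp_reward (nu x) A h n.+1 <= (gp x (A h) + B)%:E.
Proof.
move=> HB; rewrite step -Ef_gp.
apply: Ef_mono => v1; apply: Ef_mono => v2; rewrite EFinD; exact: leeD.
Qed.

End Pol.

Section Bounds.
Context {R : realType}.

Lemma gp_le (x p : R) : 0 <= x <= 1 -> 0 <= p <= 1 -> gp x p <= 3/8.
Proof.
move=> hx hp; rewrite gpE//; move: hx hp => /andP[? ?] /andP[? ?].
by case: (lerP p x) => ?; case: (lerP x p) => ? /=; lra.
Qed.

Lemma gp_ne (x p : R) : 2^-1 <= x <= 1 -> 0 <= p <= 1 -> p != x -> gp x p <= 8^-1 + x / 4.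
Proof.
move=> hx hp pnx; rewrite gpE//; last by move: hx => /andP[? ?]; apply/andP; split => //; lra.
move: hx hp => /andP[? ?] /andP[? ?].
by case: (lerP p x) => px; case: (lerP x p) => xp /=; lra.
Qed.

Lemma gp_x (x : R) : 0 <= x <= 1 -> gp x x = 3/8.
Proof. by move=> hx; rewrite gpE// lexx; lra. Qed.

Local Open Scope ereal_scope.

Lemma bound_all (x : R) (A : policy R) : (0 <= x <= 1)%R -> (forall h, 0 <= A h <= 1)%R ->
  forall n h, exp_reward (nu x) A h n <= (n%:R * (3/8))%:E.
Proof.
move=> hx hA; elim => [|n IH] h; first by rewrite /= mul0r.
apply: (le_trans (step_le x A h n (n%:R * (3/8)) (fun b => IH _))).
rewrite lee_fin.
have := gp_le x (A h) hx (hA h); rewrite -natr1; lra.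
Qed.

Lemma bound_good (x : R) (A : policy R) : (2^-1 <= x <= 1)%R -> (forall h, 0 <= A h <= 1)%R ->
  forall n h, (forall h', (size h' < size h + n)%N -> A h' != x) ->
  exp_reward (nu x) A h n <= (n%:R * (8^-1 + x / 4))%:E.
Proof.
move=> hx hA; elim => [|n IH] h hh; first by rewrite /= mul0r.
have IH' : forall b, exp_reward (nu x) A (rcons h b) n <= (n%:R * (8^-1 + x / 4))%:E.
  move=> b; apply: IH => h' hs; apply: hh; move: hs; rewrite size_rcons addSnnS; done.
apply: (le_trans (step_le x A h n _ IH')).
rewrite lee_fin.
have hn : (size h < size h + n.+1)%N by rewrite addnS ltnS leq_addr.
have := gp_ne x (A h) hx (hA h) (hh h hn); rewrite -natr1; lra.
Qed.

Lemma const_reward (x : R) : (0 <= x <= 1)%R ->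
  forall n h, exp_reward (nu x) (fun _ => x) h n = (n%:R * (3/8))%:E.
Proof.
move=> hx; elim => [|n IH] h; first by rewrite /= mul0r.
rewrite step /Ef /= !IH.
have := Ef_gp x x (n%:R * (3/8)); rewrite /Ef /= !EFinD => ->.
by rewrite gp_x// -natr1; congr EFin; lra.
Qed.

End Bounds.

Section Main.
Context {R : realType}.
Local Open Scope ereal_scope.

Lemma sum_ge_mem (I : eqType) (s : seq I) (f : I -> \bar R) a :
  a \in s -> (forall i, 0 <= f i) -> f a <= \sum_(i <- s) f i.
Proof.
move=> + f0; elim: s => [|b s IH] //; rewrite inE big_cons => /orP[/eqP->|As].
- by apply: leeDl; apply: sume_ge0 => i _; exact: f0.
- exact: le_trans (IH As) (leeDr _ (f0 b)).
Qed.

Lemma per_w (x : R) (A : policy R) (H : seq (seq (bool * bool))) (T : nat) :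
  (2^-1 <= x <= 1)%R -> (forall h, 0 <= A h <= 1)%R ->
  (forall h, (size h < T)%N -> h \in H) ->
  exp_reward (nu x) A [::] T <=
  (T%:R * (8^-1 + x / 4))%:E + T%:R%:E * \sum_(h <- H) ((A h == x)%:R)%:E.
Proof.
move=> hx hA hH.
have hx' : (0 <= x <= 1)%R by move: hx => /andP[? ?]; apply/andP; split => //; lra.
have s0 : 0 <= \sum_(h <- H) ((A h == x)%:R)%:E :> \bar R.
  by apply: sume_ge0 => h _; rewrite lee_fin.
have [[h0 [sh0 Ah0]]|good] := pselect (exists h, (size h < T)%N /\ A h = x).
- apply: (le_trans (bound_all x A hx' hA T [::])).
  have s1 : 1 <= \sum_(h <- H) ((A h == x)%:R)%:E :> \bar R.
    have := sum_ge_mem _ H (fun h => ((A h == x)%:R)%:E) h0 (hH _ sh0).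
    rewrite Ah0 eqxx; apply => i; by rewrite lee_fin.
  apply: (le_trans _ (leeD2l _ (lee_wpmul2l _ s1))); last by rewrite lee_fin.
  rewrite mule1 -EFinD lee_fin.
  have : (0 <= T%:R :> R)%R by [].
  move: hx => /andP[? ?]; nra.
- apply: (le_trans (bound_good x A hx hA T [::] _)); last exact: leeDl (mule_ge0 _ s0).
  move=> h' hs; apply/eqP => e; apply: good; exists h'; split => //.
Qed.

Definition bvals : seq (bool * bool) := [:: (true,true); (true,false); (false,true); (false,false)].

Fixpoint hl (n : nat) : seq (seq (bool * bool)) :=
  if n is n'.+1 then [::] :: [seq b :: h | b <- bvals, h <- hl n'] else [:: [::]].

Lemma hl_mem n h : (size h <= n)%N -> h \in hl n.
Proof.
elim: n h => [|n IH] [|b h] //=; rewrite ?inE ?eqxx//.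
rewrite ltnS => sh; apply/orP; right; have Hh := IH _ sh.
by case: b => [[] []]; rewrite !mem_cat ?(map_f (cons _) Hh) ?orbT.
Qed.

Lemma pige d (Om : measurableType d) (Q : probability Om R) (f : Om -> R) (xs : nat -> R) :
  measurable_fun setT f -> injective xs ->
  forall K, \sum_(k < K) Q (f @^-1` [set xs k]) <= 1.
Proof.
move=> mf ixs K.
have mF : forall k, measurable (f @^-1` [set xs k]).
  by move=> k; rewrite -[X in measurable X]setTI; apply: mf => //; exact: measurable_set1.
have tF : trivIset setT (fun k => f @^-1` [set xs k]).
  by move=> i j _ _ [w [/= Hi Hj]]; apply: ixs; rewrite -Hi -Hj.
rewrite -(@measure_bigsetU _ _ _ Q (fun k => f @^-1` [set xs k]) mF tF K).
by apply: probability_le1; apply: bigsetU_measurable.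
Qed.

Lemma sum1_seq (I : Type) (s : seq I) : \sum_(i <- s) (1 : \bar R) = (size s)%:R%:E.
Proof.
elim: s => [|a s IH]; first by rewrite big_nil.
by rewrite big_cons IH -EFinD /= -natr1 addrC.
Qed.

End Main.

Lemma nu01 {R : realType} (x : R) : (0 <= x <= 1)%R -> prob_on01 (nu x).
Proof.
move=> /andP[x0 x1].
have m01 : measurable (`[0%R, 1%R]%classic : set R) by exact: measurable_itv.
rewrite /prob_on01; have := integral_indic (nu x) measurableT m01; rewrite setIT => <-.
rewrite nu_int//.
have i0 : (0:R) \in (`[0%R, 1%R]%classic : set R) by rewrite inE /= in_itv /= lexx ler01.
have ix : x \in (`[0%R, 1%R]%classic : set R) by rewrite inE /= in_itv /= x0 x1.
have i1 : (1:R) \in (`[0%R, 1%R]%classic : set R) by rewrite inE /= in_itv /= lexx ler01.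
rewrite !indicE i0 ix i1 -!EFinD -EFinM; congr EFin; rewrite /=; lra.
Qed.

Theorem theorem5p4 (R : realType) (T : nat) (d : measure_display)
    (Omega : measurableType d) (Q : probability Omega R)
    (alg : Omega -> policy R) :
  valid_alg alg ->
  (ereal_sup [set regret Q alg nu T | nu in [set nu : probability R R | prob_on01 nu]]
    >= (T%:R / 9 : R)%:E)%E.
Proof.
move=> [hp hm].
have hA : forall w h, (0 <= alg w h <= 1)%R by move=> w h; move: (hp w h); rewrite in_itv.
set H := hl T; set N := size H; set K := (100 * N).+1.
have Kpos : (0 < K%:R :> R)%R by rewrite ltr0n.
pose xs (k : nat) : R := 2^-1 + (k%:R / K%:R) / 100.
have ixs : injective xs.
  have Kn0 : K%:R != 0 :> R by rewrite lt0r_neq0.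
  have ek : forall k, k%:R = (k%:R / K%:R / 100) * 100 * K%:R :> R.
    by move=> k; field; rewrite Kn0.
  move=> k1 k2 /addrI e'; apply/eqP; rewrite -(eqr_nat R) (ek k1) (ek k2) e' //.
pose S k := (\sum_(h <- H) Q ((fun w => alg w h) @^-1` [set xs k]))%E.
have Ssum : (\sum_(k < K) S k <= N%:R%:E)%E.
  rewrite /S exchange_big /= /N -sum1_seq; apply: lee_sum => h _.
  exact: pige (hm h) ixs K.
have [k [kK Sk]] : exists k, (k < K)%N /\ (S k <= (100^-1 : R)%:E)%E.
  case: (pselect (exists k, (k < K)%N /\ (S k <= (100^-1 : R)%:E)%E)) => // Hn; exfalso.
  have : ((K%:R * 100^-1 : R)%:E <= N%:R%:E)%E.
    apply: le_trans Ssum.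
    have -> : ((K%:R * 100^-1 : R)%:E = \sum_(k < K) (100^-1 : R)%:E)%E.
      by rewrite sumEFin sumr_const card_ord mulr_natl.
    apply: lee_sum => i _.
    have : ~ (S i <= (100^-1 : R)%:E)%E by move=> hle; apply: Hn; exists i; split.
    by move/negP; rewrite -ltNge => /ltW.
  by rewrite lee_fin /K -natr1 natrM; lra.
set x := xs k.
have q0 : (0 <= k%:R / K%:R :> R)%R by rewrite divr_ge0.
have q1 : (k%:R / K%:R <= 1 :> R)%R by rewrite ler_pdivrMr// mul1r ler_nat ltnW.
have hx : (2^-1 <= x <= 1)%R by rewrite /x /xs; apply/andP; split; lra.
have hx' : (0 <= x <= 1)%R by rewrite /x /xs; apply/andP; split; lra.
have hxu : (x <= 2^-1 + 100^-1)%R by rewrite /x /xs; lra.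
pose E h := (fun w => alg w h) @^-1` [set x].
have mE : forall h, measurable (E h).
  by move=> h; rewrite -[X in measurable X]setTI; apply: (hm h) => //; exact: measurable_set1.
pose F w := ((T%:R * (8^-1 + x / 4))%:E + T%:R%:E * \sum_(h <- H) (\1_(E h) w)%:E)%E.
have pw : forall w, (exp_reward (nu x) (alg w) [::] T <= F w)%E.
  move=> w; rewrite /F (eq_bigr (fun h => ((alg w h == x)%:R)%:E)).
    apply: per_w; [exact: hx|exact: (hA w)|].
    by move=> h sh; apply: hl_mem; exact: ltnW.
  move=> h _; rewrite indicE; congr (_%:R%:E).
  case: (boolP (w \in E h)) => [/set_mem /= ->|/negP Hn]; first by rewrite eqxx.
  have ne : alg w h != x by apply/eqP => e; apply: Hn; apply: mem_set.
  by rewrite (negbTE ne).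
have intF : (\int[Q]_w F w = (T%:R * (8^-1 + x / 4))%:E + T%:R%:E * S k)%E.
  have mI : forall h, measurable_fun setT (fun w => (\1_(E h) w)%:E : \bar R).
    by move=> h; apply/measurable_EFinP; exact: measurable_indic.
  rewrite ge0_integralD//; first last.
  all: try by apply: measurable_funeM; exact: emeasurable_sum.
  all: try by move=> w _; rewrite lee_fin; apply: mulr_ge0 => //; lra.
  all: try by move=> w _; apply: mule_ge0 => //; apply: sume_ge0 => h _; rewrite lee_fin.
  congr (_ + _)%E; first by rewrite integral_cst// -[RHS]mule1; congr (_ * _)%E; exact: probability_setT.
  rewrite ge0_integralZl_EFin//; last 2 first.
  - by move=> w _; apply: sume_ge0 => h _; rewrite lee_fin.
  - exact: emeasurable_sum.
  congr (_ * _)%E; rewrite ge0_integral_sum//; try by move=> h w _; rewrite lee_fin.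
  by apply: eq_bigr => h _; rewrite integral_indic// setIT.
have mem : [set regret Q alg nu0 T | nu0 in [set nu0 : probability R R | prob_on01 nu0]]
    (regret Q alg (nu x) T) by exists (nu x) => //; exact: nu01.
apply: (le_trans _ (ereal_sup_ubound mem)).
rewrite /regret.
have hsup : ((T%:R * (3/8))%:E <=
    ereal_sup [set fixed_reward (nu x) p T | p in `[0%R, 1%R]%classic])%E.
  apply: ereal_sup_ubound; exists x; last by rewrite /fixed_reward const_reward.
  by rewrite /= in_itv /=; move: hx' => /andP[-> ->].
have halg : (alg_reward Q alg (nu x) T <= (T%:R * (8^-1 + x / 4))%:E + T%:R%:E * S k)%E.
  rewrite /alg_reward -intF; apply: le_int_nm => w; [exact: exp_reward_ge0|exact: pw].
apply: le_trans (leeB hsup halg).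
have S0 : (0 <= S k)%E by apply: sume_ge0 => h _; exact: measure_ge0.
have Sfin : S k \is a fin_num.
  by rewrite ge0_fin_numE// (le_lt_trans Sk)// ltry.
rewrite -(fineK Sfin) -EFinM -EFinD lee_fin.
have s0 : (0 <= fine (S k))%R by rewrite fine_ge0.
have s1 : (fine (S k) <= 100^-1)%R by rewrite -lee_fin fineK.
have T0 : (0 <= T%:R :> R)%R by [].
have hpos : (0 <= 4^-1 - x / 4 - fine (S k) - 9^-1 :> R)%R by lra.
have := mulr_ge0 T0 hpos; nra.
Qed.
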